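(* Let $\Omega\subset\mathbb{R}^n$ ($n\ge1$) be a bounded domain, $T>0$, $\delta\in(0,1)\cup(1,2)$, $\bar Q:=\bar\Omega\times[0,T]$ and $Q:=\Omega\times(0,T]$. Let $u$ be a classical solution of the initial-boundary value problem described in the context, and suppose $u\in C^{2,\bar\delta}(\bar Q)$. Suppose moreover that the boundary value problem \[ L_0w(x)=f(x,0)\ \text{ for } x\in\Omega,\qquad w(x)=\psi(x,0)\ \text{ for } x\in\partial\Omega \] has at most one solution $w$, where $L_0w(x):=-\sum_{i,j=1}^n p_{ij}(x,0)\,\partial^2 w/\partial x_i\partial x_j+\sum_{i=1}^n q_i(x,0)\,\partial w/\partial x_i+r(x,0)w$. Then the initial value $\phi_0$ is a solution of this boundary value problem and hence is uniquely determined by $L_0$, $f(\cdot,0)$ and $\psi(\cdot,0)$ (it is the unique solution of that problem).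
   Context: Set $\bar\delta=1$ if $0<\delta<1$ and $\bar\delta=2$ if $1<\delta<2$. The Caputo fractional derivative is \[ D_t^\delta g(x,t):=\frac{1}{\Gamma(\bar\delta-\delta)}\int_0^t (t-s)^{\bar\delta-\delta-1}\,\frac{\partial^{\bar\delta}g(x,s)}{\partial s^{\bar\delta}}\,ds,\qquad x\in\Omega,\ 0<t\le T. \] The problem is: $D_t^\delta u-\sum_{i,j=1}^n p_{ij}(x,t)\,\partial^2u/\partial x_i\partial x_j+\sum_{i=1}^n q_i(x,t)\,\partial u/\partial x_i+r(x,t)u=f(x,t)$ for $(x,t)\in Q$; $u(x,t)=\psi(x,t)$ for $(x,t)\in\partial\Omega\times(0,T]$; $u(x,0)=\phi_0(x)$ for $x\in\bar\Omega$; and, only when $1<\delta<2$, $u_t(x,0)=\phi_1(x)$ for $x\in\Omega$. The spatial operator is uniformly elliptic on $Q$; $p_{ij},q_i,r,\psi,\phi_0,\phi_1$ are continuous on the closures of their domains; $f$ is continuous on $\bar Q$; and $\phi_0(x)=\psi(x,0)$ for all $x\in\partial\Omega$. A classical solution is a function $u$ continuous on $\bar Q$ for which $D_t^\delta u$, $\partial u/\partial x_i$, $\partial^2u/\partial x_i\partial x_j$ exist at every point of $Q$ and the equation and conditions hold pointwise. $C^{2,\bar\delta}(\bar Q)$ denotes the set of $w\in C(\bar Q)$ such that $\partial w/\partial x_i$, $\partial^2w/\partial x_i\partial x_j$ ($1\le i,j\le n$) and $\partial^k w/\partial t^k$ for $k=1,\bar\delta$ all lie in $C(\bar Q)$. 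*)

(* Defs.v *)
From HB Require Import structures.
From mathcomp Require Import all_boot all_order all_algebra.
From mathcomp Require Import all_classical all_reals all_analysis.
Set Implicit Arguments. Unset Strict Implicit. Unset Printing Implicit Defensive.
Import Order.TTheory GRing.Theory Num.Theory.
Import numFieldNormedType.Exports.
Local Open Scope classical_set_scope.
Local Open Scope ring_scope.

Section Defs.
Variable R : realType.

Definition Gamma (a : R) : R :=
  \int[lebesgue_measure]_(s in `]0%R, +oo[) (s `^ (a - 1) * expR (- s)).

Definition delta_bar (d : R) : nat := if d < 1 then 1%N else 2%N.

Variable n : nat.
Notation V := 'rV[R]_n.

Definition unitv (i : 'I_n) : V := delta_mx 0 i.

Definition pd (g : V -> R) (i : 'I_n) (x : V) : R := 'D_(unitv i) g x.

Definition dx (i : 'I_n) (u : V -> R -> R) : V -> R -> R :=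
  fun x t => pd (fun y => u y t) i x.
Definition dxx (i j : 'I_n) (u : V -> R -> R) : V -> R -> R := dx i (dx j u).
Definition dt (u : V -> R -> R) : V -> R -> R := fun x t => derive1 (u x) t.
Definition dtk (k : nat) (u : V -> R -> R) : V -> R -> R := iter k dt u.

Definition uncurry2 (u : V -> R -> R) : V * R -> R := fun z => u z.1 z.2.

Definition bdry (Om : set V) : set V := closure Om `\` Om.

Definition Qbar (Om : set V) (T : R) : set (V * R) := closure Om `*` `[0, T].
Definition Qset (Om : set V) (T : R) : set (V * R) := Om `*` `]0, T].
Definition Qint (Om : set V) (T : R) : set (V * R) := Om `*` `]0, T[.

Definition caputo (d : R) (u : V -> R -> R) (x : V) (t : R) : R :=
  (Gamma ((delta_bar d)%:R - d))^-1 *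
  \int[lebesgue_measure]_(s in `]0, t[)
     ((t - s) `^ ((delta_bar d)%:R - d - 1) * dtk (delta_bar d) u x s).

(* existence of D_t^delta u (x,t): the needed time derivatives exist on (0,t)
   and the (improper) integral converges (Lebesgue integrability) *)
Definition caputo_exists (d : R) (u : V -> R -> R) (x : V) (t : R) : Prop :=
  (forall s, 0 < s < t ->
     forall m, (m < delta_bar d)%N -> derivable (dtk m u x) s 1) /\
  lebesgue_measure.-integrable `]0, t[
     (fun s => ((t - s) `^ ((delta_bar d)%:R - d - 1) * dtk (delta_bar d) u x s)%:E).

Definition Lop (p : 'I_n -> 'I_n -> V -> R -> R) (q : 'I_n -> V -> R -> R)
  (r : V -> R -> R) (u : V -> R -> R) (x : V) (t : R) : R :=
  - (\sum_(i < n) \sum_(j < n) p i j x t * dxx i j u x t)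
  + (\sum_(i < n) q i x t * dx i u x t) + r x t * u x t.

Definition unif_elliptic (Om : set V) (T : R) (p : 'I_n -> 'I_n -> V -> R -> R) :=
  exists lam : R, 0 < lam /\
    forall x t, Qset Om T (x, t) -> forall xi : V,
      lam * (\sum_(i < n) xi 0 i ^+ 2) <=
      \sum_(i < n) \sum_(j < n) p i j x t * xi 0 i * xi 0 j.

Definition classical_solution (Om : set V) (T d : R)
  (p : 'I_n -> 'I_n -> V -> R -> R) (q : 'I_n -> V -> R -> R) (r f psi : V -> R -> R)
  (phi0 phi1 : V -> R) (u : V -> R -> R) : Prop :=
  [/\ {within Qbar Om T, continuous (uncurry2 u)},
      (forall x t, Qset Om T (x, t) ->
         [/\ caputo_exists d u x t,
             (forall i, derivable (fun y => u y t) x (unitv i)) &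
             (forall i j, derivable (fun y => dx j u y t) x (unitv i))]),
      (forall x t, Qset Om T (x, t) -> caputo d u x t + Lop p q r u x t = f x t),
      (forall x t, bdry Om x -> 0 < t <= T -> u x t = psi x t) /\
      (forall x, closure Om x -> u x 0 = phi0 x) &
      (1 < d -> forall x, Om x ->
         (fun h => h^-1 * (u x h - u x 0)) @ 0^'+ --> phi1 x)].

Definition ext_cont (Om : set V) (T : R) (g : V -> R -> R) : Prop :=
  exists G : V * R -> R, {within Qbar Om T, continuous G} /\
    forall z, Qint Om T z -> G z = g z.1 z.2.

Definition C2k (Om : set V) (T : R) (k : nat) (w : V -> R -> R) : Prop :=
  [/\ {within Qbar Om T, continuous (uncurry2 w)},
      (forall i, (forall z, Qint Om T z -> derivable (fun y => w y z.2) z.1 (unitv i))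
                 /\ ext_cont Om T (dx i w)),
      (forall i j, (forall z, Qint Om T z ->
                      derivable (fun y => dx j w y z.2) z.1 (unitv i))
                   /\ ext_cont Om T (dxx i j w)) &
      (forall m, (1 <= m <= k)%N ->
         (forall z, Qint Om T z -> derivable (dtk m.-1 w z.1) z.2 1)
         /\ ext_cont Om T (dtk m w))].

Definition L0 (p : 'I_n -> 'I_n -> V -> R -> R) (q : 'I_n -> V -> R -> R)
  (r : V -> R -> R) (w : V -> R) (x : V) : R :=
  - (\sum_(i < n) \sum_(j < n) p i j x 0 * pd (pd w j) i x)
  + (\sum_(i < n) q i x 0 * pd w i x) + r x 0 * w x.

Definition bvp_solution (Om : set V)
  (p : 'I_n -> 'I_n -> V -> R -> R) (q : 'I_n -> V -> R -> R) (r f psi : V -> R -> R)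
  (w : V -> R) : Prop :=
  [/\ {within closure Om, continuous w},
      (forall x, Om x -> forall i, derivable w x (unitv i) /\
                         forall j, derivable (pd w j) x (unitv i)),
      (forall x, Om x -> L0 p q r w x = f x 0) &
      (forall x, bdry Om x -> w x = psi x 0)].

End Defs.

(* Main.v *)
Require Import Defs.
From HB Require Import structures.
From mathcomp Require Import all_boot all_order all_algebra.
From mathcomp Require Import all_classical all_reals all_analysis.
From mathcomp Require Import ring lra measurable_realfun.
Import Order.TTheory GRing.Theory Num.Theory.
Import numFieldNormedType.Exports.
Local Open Scope classical_set_scope.
Local Open Scope ring_scope.
Set Implicit Arguments. Unset Strict Implicit. Unset Printing Implicit Defensive.

Section S2.
Variable R : realType.
Local Notation mu := (@lebesgue_measure R).

Lemma der_pw (t p s : R) : s < t ->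
  is_derive s 1 (((@powR R)^~ p) \o (cst t - id)) (p * (t - s) `^ (p - 1) * (0 - 1)).
Proof.
move=> st.
apply: is_derive1_comp.
  by apply: is_derive1_powR; rewrite subr_gt0.

Qed.

Lemma int_cb (a t b : R) : 0 < a -> 0 < b -> b < t ->
  (\int[mu]_(s in `[0%R, b]) ((t - s) `^ (a - 1))%:E <= (t `^ a / a)%:E)%E.
Proof.
move=> a0 b0 bt.
pose F := (- a^-1) *: (((@powR R)^~ a) \o (cst t - id)) : R -> R.
have dF s : s < t -> is_derive s 1 F ((t - s) `^ (a - 1)).
  move=> st; have := is_deriveZ (- a^-1) (der_pw a st).
  congr is_derive.
  by rewrite /GRing.scale /=; field; rewrite gt_eqF.
have cf : {within `[0, b], continuous (fun s => (t - s) `^ (a - 1))}.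
  apply: derivable_within_continuous => s; rewrite in_itv /= => /andP[_ sb].
  have [+ _] := der_pw (a - 1) (le_lt_trans sb bt).
  by [].
have cF : {within `[0, b], continuous F}.
  apply: derivable_within_continuous => s; rewrite in_itv /= => /andP[_ sb].
  by have [] := dF s (le_lt_trans sb bt).
have [_ cF0 cFb] := (continuous_within_itvP _ b0).1 cF.
rewrite (@continuous_FTC2 _ _ F) //; last first.
- move=> s; rewrite in_itv /= => /andP[_ sb].
  by rewrite derive1E; have [_ ->] := dF s (lt_trans sb bt).
- split => //; move=> s; rewrite in_itv /= => /andP[_ sb].
  by have [] := dF s (lt_trans sb bt).
rewrite -EFinD lee_fin /F /=.
have FE s : (- a^-1 *: ((@powR R)^~ a \o (cst t - id))) s = - (a^-1 * (t - s) `^ a).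
  by rewrite -mulNr.
rewrite !FE subr0.
have h1 : 0 <= a^-1 * (t - b) `^ a by rewrite mulr_ge0 ?powR_ge0 // invr_ge0 ltW.
rewrite (mulrC _ a^-1).
lra.
Qed.

Lemma mf_pw (t p : R) : measurable_fun [set: R] (EFin \o (fun s : R => ((t - s) `^ p))).
Proof.
apply/measurable_EFinP.
apply: (@measurableT_comp _ _ _ _ _ _ ((@powR R)^~ p)) => //.
exact: measurable_funB.
Qed.

Lemma pow_int_le (a t : R) : 0 < a -> 0 < t ->
  (\int[mu]_(s in `]0%R, t[) ((t - s) `^ (a - 1))%:E <= (t `^ a / a)%:E)%E.
Proof.
move=> a0 t0.
pose f := fun s : R => ((t - s) `^ (a - 1))%:E.
pose b := fun k : nat => t - t / (k.+2)%:R.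
have tk k : t / (k.+2)%:R < t.
  by rewrite ltr_pdivrMr // ltr_pMr // ltr1n.
have tk0 k : 0 < t / (k.+2)%:R by rewrite divr_gt0.
have b0 k : 0 < b k by rewrite subr_gt0.
have bt k : b k < t by rewrite ltrBlDr ltrDl.
have bnd k m : (k <= m)%N -> b k <= b m.
  move=> km; rewrite lerD2l lerN2; apply: ler_wpM2l; first exact: ltW.
  by rewrite lef_pV2 ?posrE ?ltr0n // ler_nat.
have mD : measurable (`]0%R, t[ : set R) by exact: measurable_itv.
pose g' := fun k : nat => f \_ `]-oo, b k].
have mf : measurable_fun [set: R] f by exact: mf_pw.
have mg' k : measurable_fun `]0%R, t[ (g' k).
  apply: (@measurable_restrict _ _ _ _ `]-oo, b k] `]0%R, t[ f (measurable_itv _) (measurable_itv _)).1.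
  exact: (measurable_funS measurableT (@subsetT _ _) mf).
have f0 x : (0 <= f x)%E by rewrite lee_fin powR_ge0.
have g'0 k x : (0 <= g' k x)%E by rewrite /g' /patch; case: ifP.
have nd x : `]0%R, t[%classic x -> {homo g'^~ x : k m / (k <= m)%N >-> (k <= m)%E}.
  move=> _ k m km; rewrite /g' /patch.
  case: ifPn => [|_]; last exact: g'0.
  rewrite !inE /= !in_itv /= => xk.
  by rewrite ifT // inE /= in_itv /= (le_trans xk (bnd _ _ km)).
have MC := monotone_convergence mu mD mg' (fun k x _ => g'0 k x) nd.
have -> : (\int[mu]_(s in `]0%R, t[) f s = \int[mu]_(x in `]0%R, t[) (fun x0 => limn (g'^~ x0)) x)%E.
  apply: eq_integral => x; rewrite inE /= in_itv /= => /andP[x0 xt].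
  apply/esym/lim_near_cst => //.
  exists (Num.trunc (t / (t - x))) => // k /= Nk.
  rewrite /g' /patch ifT // inE /= in_itv /= /b lerBrDl -lerBrDr.
  have txp : 0 < t - x by rewrite subr_gt0.
  rewrite ler_pdivrMr ?ltr0n // mulrC -ler_pdivrMr //.
  apply: ltW; apply: (lt_le_trans (truncnS_gt _)).
  by rewrite ler_nat ltnS (leq_trans Nk).
rewrite MC.
apply: lime_le.
  apply: ereal_nondecreasing_is_cvgn => k m km.
  apply: ge0_le_integral => //; [exact: mg' | exact: mg' | by move=> x Dx; apply: nd].
apply: nearW => k.
rewrite -integral_mkcondr.
have -> : `]0%R, t[%classic `&` `]-oo, b k]%classic = `]0%R, b k]%classic :> set R.
  apply/seteqP; split => x /=; rewrite !in_itv /=.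
    by move=> [/andP[-> _] ->].
  move=> /andP[-> xb]; split => //; exact: le_lt_trans xb (bt k).
rewrite integral_itv_obnd_cbnd; last exact: (measurable_funS measurableT (@subsetT _ _) mf).
exact: int_cb.
Qed.

Lemma caputo_bound (a t M : R) (g : R -> R) : 0 < a -> 0 < t ->
  mu.-integrable `]0%R, t[ (EFin \o (fun s : R => (t - s) `^ (a - 1) * g s)) ->
  (forall s, 0 < s < t -> `|g s| <= M) ->
  `|\int[mu]_(s in `]0%R, t[) ((t - s) `^ (a - 1) * g s)| <= M * (t `^ a / a).
Proof.
move=> a0 t0 Hi HM.
have M0 : 0 <= M.
  apply: le_trans (HM (t / 2) _) => //.
  by rewrite divr_gt0 //= ltr_pdivrMr // ltr_pMr // ltr1n.
have mD : measurable (`]0%R, t[ : set (g_sigma_algebraType R.-ocitv.-measurable)).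
  exact: measurable_itv.
apply: (le_trans (@le_normr_Rintegral _ _ _ mu _ (fun s => (t - s) `^ (a - 1) * g s) mD Hi)).
have I := integrable_abse Hi.
have fin := integrable_fin_num mD I.
rewrite /Rintegral.
rewrite -[X in _ <= X]/(fine (M * (t `^ a / a))%:E).
apply: fine_le => //.
apply: (@le_trans _ _ (\int[mu]_(s in `]0%R, t[) (M%:E * ((t - s) `^ (a - 1))%:E))%E).
  apply: ge0_le_integral => //.
  - exact: measurable_int I.
  - apply: emeasurable_funM => //.
    exact: (measurable_funS measurableT (@subsetT _ _) (mf_pw t (a - 1))).
  - move=> s; rewrite /= in_itv /= => sin.
    rewrite -EFinM lee_fin normrM ger0_norm ?powR_ge0 // mulrC.
    by apply: ler_wpM2r; [exact: powR_ge0 | exact: HM].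
rewrite ge0_integralZl_EFin //; try (by move=> s _; rewrite lee_fin powR_ge0);
  try (exact: (measurable_funS measurableT (@subsetT _ _) (mf_pw t (a - 1)))).
rewrite EFinM; apply: lee_pmul => //.
  by apply: integral_ge0 => s _; rewrite lee_fin powR_ge0.
exact: pow_int_le.
Qed.
End S2.

Section S.
Variable R : realType.

Lemma cvg_le_bound {T} (F : set_system T) {PF : ProperFilter F} (f : T -> R) (l c eps : R) :
  f @ F --> l -> (\forall t \near F, `|c - f t| <= eps) -> `|c - l| <= eps.
Proof.
move=> fl Hb; rewrite leNgt; apply/negP => H.
have d0 : 0 < `|c - l| - eps by rewrite subr_gt0.
have Hl : \forall t \near F, `|l - f t| < `|c - l| - eps by move/cvgrPdist_lt : fl; apply.
have [t [/= h1 h2]] := filter_ex (filterI Hb Hl).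
have : `|c - l| < `|c - l|.
  apply: (le_lt_trans (ler_distD (f t) c l)).
  have -> : `|c - l| = eps + (`|c - l| - eps) by rewrite subrKC.
  by apply: ler_ltD => //; rewrite distrC.
by rewrite ltxx.
Qed.

Variable n : nat.
Notation V := 'rV[R]_n.

Lemma dir_line (g : V -> R) (y e : V) (c : R) :
  derivable g (c *: e + y) e ->
  is_derive c 1 (fun s => g (s *: e + y)) ('D_e g (c *: e + y)).
Proof.
move=> dg.
have E : (fun h : R => h^-1 *: (((fun s => g (s *: e + y)) \o shift c) (h *: 1) - g (c *: e + y)))
   = (fun h : R => h^-1 *: ((g \o shift (c *: e + y)) (h *: e) - g (c *: e + y))).
  apply/funext => h /=; congr (_ *: (g _ - _)).
  by rewrite /shift scalerDl [h *: 1]mulr1 addrA.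
have dl : derivable (fun s : R => g (s *: e + y)) c 1.
  by rewrite /derivable E; exact: dg.
split => //.
by rewrite /derive E.
Qed.

Lemma mvt_step (w : V -> R -> R) (G : V * R -> R) (x e : V) (rho t a b : R) :
  (forall y, `|y - x| < rho -> 
      derivable (fun z => w z t) y e /\ 'D_e (fun z => w z t) y = G (y, t)) ->
  a < b -> (forall c, a <= c <= b -> `|c *: e| < rho) ->
  exists2 c, c \in `]a, b[ & w (b *: e + x) t - w (a *: e + x) t = G (c *: e + x, t) * (b - a).
Proof.
move=> Hd ab Hc.
have Hy c : a <= c <= b -> `|(c *: e + x) - x| < rho by move=> /Hc; rewrite addrK.
apply: (@MVT R (fun s => w (s *: e + x) t) (fun c => G (c *: e + x, t))) => //.
- move=> c; rewrite in_itv /= => /andP[ac cb].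
  have [H1 H2] := Hd _ (Hy c (introT andP (conj (ltW ac) (ltW cb)))).
  by rewrite -H2; apply: dir_line.
- apply: derivable_within_continuous => c; rewrite in_itv /= => /andP[ac cb].
  have [H1 H2] := Hd _ (Hy c (introT andP (conj ac cb))).
  by have [] := dir_line H1.
Qed.

Lemma deriv_limit (w : V -> R -> R) (G : V * R -> R) (h0 : V -> R) (x e : V) (rho tau : R) :
  0 < rho -> 0 < tau ->
  (forall y, `|y - x| < rho -> forall t, 0 < t < tau ->
      derivable (fun z => w z t) y e /\ 'D_e (fun z => w z t) y = G (y, t)) ->
  (forall y, `|y - x| < rho -> w y t @[t --> 0^'+] --> h0 y) ->
  (forall eps, 0 < eps -> exists2 eta, 0 < eta &
     forall y t, `|y - x| < eta -> 0 < t < eta -> `|G (y, t) - G (x, 0)| < eps) ->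
  is_derive x e h0 (G (x, 0)).
Proof.
move=> rho0 tau0 Hd Hl Hc.
suff L : (fun h : R => h^-1 *: ((h0 \o shift x) (h *: e) - h0 x)) @ 0^' --> G (x, 0).
  have dv : derivable h0 x e by apply/cvg_ex; exists (G (x, 0)).
  by split => //; rewrite /derive (cvg_lim _ L).
apply/cvgrPdist_le => eps eps0.
have [eta eta0 Heta] := Hc _ eps0.
pose K := Num.min rho eta.
have K0 : 0 < K by rewrite lt_min rho0 eta0.
have Ke0 : 0 < K / (`|e| + 1) by rewrite divr_gt0 // ltr_wpDl.
near=> h.
have hn0 : h != 0 by near: h; exact: nbhs_dnbhs_neq.
have hK : `|h| < K / (`|e| + 1) by near: h; exact: (nbhs_dnbhs (@nbhs0_lt _ R^o _ Ke0)).
have cK c : `|c| <= `|h| -> `|c *: e| < K.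
  move=> ch; rewrite normrZ.
  have : `|c| * `|e| <= `|h| * (`|e| + 1).
    by apply: ler_pM => //; rewrite lerDl.
  move/le_lt_trans; apply.
  by rewrite -ltr_pdivlMr // ltr_wpDl.
have xr : `|x - x| < rho by rewrite subrr normr0.
have hr : `|(h *: e + x) - x| < rho.
  by rewrite addrK (lt_le_trans (cK h (lexx _))) // ge_min lexx.
rewrite /= /shift.
apply: (@cvg_le_bound _ (0^'+) _ (fun t => h^-1 * (w (h *: e + x) t - w x t))).
  by apply: cvgM; [exact: cvg_cst | apply: cvgB; [exact: Hl | exact: Hl]].
near=> t.
have t00 : 0 < t by near: t; exact: nbhs_right_gt.
have ttau : t < tau by near: t; exact: nbhs_right_lt.
have t0 : 0 < t < tau by rewrite t00 ttau.
have teta : t < eta by near: t; exact: nbhs_right_lt.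
have Hd' : forall y, `|y - x| < rho -> derivable (fun z => w z t) y e /\ 'D_e (fun z => w z t) y = G (y, t).
  by move=> y yr; exact: Hd.
have cr c : `|c| <= `|h| -> `|c *: e| < rho.
  by move=> /cK /lt_le_trans; apply; rewrite ge_min lexx.
have close c : `|c| <= `|h| -> `|G (x, 0) - G (c *: e + x, t)| <= eps.
  move=> ch; rewrite distrC; apply: ltW; apply: Heta; last by rewrite t00 teta.
  by rewrite addrK (lt_le_trans (cK c ch)) // ge_min lexx orbT.
have [hpos|hneg] := ltP 0 h.
- have c1 : forall c, 0 <= c <= h -> `|c *: e| < rho.
    by move=> c /andP[c0 ch]; apply: cr; rewrite !ger0_norm // ?ltW // (le_trans c0 ch).
  have [c cin E] := mvt_step Hd' hpos c1.
  move: E; rewrite scale0r add0r subr0 => ->.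
  rewrite mulrCA mulVf // mulr1; apply: close.
  move: cin; rewrite in_itv /= => /andP[c0 ch].
  by rewrite !gtr0_norm // ltW.
- have hlt : h < 0 by rewrite lt_neqAle hn0 hneg.
  have c1 : forall c, h <= c <= 0 -> `|c *: e| < rho.
    move=> c /andP[hc c0]; apply: cr; rewrite !ler0_norm ?lerN2 // ?(le_trans hc c0).

  have [c cin E] := mvt_step Hd' hlt c1.
  move: E; rewrite scale0r add0r sub0r => E.
  rewrite -[w (h *: e + x) t - w x t]opprB E mulrN opprK.
  rewrite !mulrN mulrCA mulVf // mulr1.
  apply: close.
  move: cin; rewrite in_itv /= => /andP[hc c0].
  by rewrite !ltr0_norm // lerN2 ltW.
Unshelve. all: by end_near. Qed.

Lemma within_eps (g : V * R -> R) (A : set (V * R)) (z : V * R) :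
  {within A, continuous g} -> A z ->
  forall eps, 0 < eps -> exists2 eta, 0 < eta &
    forall w, A w -> `|w.1 - z.1| < eta -> `|w.2 - z.2| < eta -> `|g w - g z| < eps.
Proof.
move=> /subspace_continuousP cg Az eps e0.
have := cg z Az.
move/cvgrPdist_lt => /(_ eps e0).
move=> /nbhs_ballP [eta eta0 H].
exists eta => // w Aw w1 w2.
rewrite distrC; apply: (H w) => //.
split => /=; rewrite -ball_normE /ball_ /= distrC //.
Qed.

Lemma ct_lem (g : V * R -> R) (A : set (V * R)) (y : V) (T : R) :
  {within A, continuous g} -> (forall t, 0 <= t <= T -> A (y, t)) -> 0 < T ->
  g (y, t) @[t --> 0^'+] --> g (y, 0).
Proof.
move=> cg HA T0; apply/cvgrPdist_lt => eps e0.
have Q0 : A (y, 0) by apply: HA; rewrite lexx ltW.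
have [eta eta0 H] := within_eps cg Q0 e0.
near=> t.
have t0 : 0 < t by near: t; exact: nbhs_right_gt.
have tT : t < T by near: t; exact: nbhs_right_lt.
have te : t < eta by near: t; exact: nbhs_right_lt.
rewrite distrC; apply: H => /=.
- by apply: HA; rewrite !ltW.
- by rewrite subrr normr0.
- by rewrite subr0 gtr0_norm.
Unshelve. all: by end_near. Qed.
End S.
Unset Implicit Arguments.

Theorem corollary2p7 (R : realType) (n : nat) (Om : set 'rV[R]_n) (T d : R)
  (p : 'I_n -> 'I_n -> 'rV[R]_n -> R -> R) (q : 'I_n -> 'rV[R]_n -> R -> R)
  (r f psi : 'rV[R]_n -> R -> R) (phi0 phi1 : 'rV[R]_n -> R)
  (u : 'rV[R]_n -> R -> R) :
  (0 < n)%N ->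
  open Om -> connected Om -> Om !=set0 -> bounded_set Om ->
  0 < T ->
  (0 < d < 1) \/ (1 < d < 2) ->
  unif_elliptic Om T p ->
  (forall i j, {within Qbar Om T, continuous (uncurry2 (p i j))}) ->
  (forall i, {within Qbar Om T, continuous (uncurry2 (q i))}) ->
  {within Qbar Om T, continuous (uncurry2 r)} ->
  {within Qbar Om T, continuous (uncurry2 f)} ->
  {within bdry Om `*` `[0, T], continuous (uncurry2 psi)} ->
  {within closure Om, continuous phi0} ->
  {within closure Om, continuous phi1} ->
  (forall x, bdry Om x -> phi0 x = psi x 0) ->
  classical_solution Om T d p q r f psi phi0 phi1 u ->
  C2k Om T (delta_bar d) u ->
  (forall w1 w2, bvp_solution Om p q r f psi w1 -> bvp_solution Om p q r f psi w2 ->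
     forall x, closure Om x -> w1 x = w2 x) ->
  bvp_solution Om p q r f psi phi0 /\
  (forall w, bvp_solution Om p q r f psi w -> forall x, closure Om x -> w x = phi0 x).
Proof.
move=> n0 oOm cOm neOm bOm T0 hd ell cp cq cr cf cpsi cphi0 cphi1 hbd Hcs HC Huniq.
case: Hcs => cu Hder Heq [Hbdry Hinit] Hphi1.
case: HC => cu' Hdx Hdxx Hdt.
have [G1 HG1] := choice (fun i => (Hdx i).2).
have [G2 HG2] : {G2 : 'I_n -> 'I_n -> 'rV[R]_n * R -> R & forall i j,
   {within Qbar Om T, continuous G2 i j} /\
   (forall z, Qint Om T z -> G2 i j z = dxx i j u z.1 z.2)}.
  have H : forall i, exists g : 'I_n -> 'rV[R]_n * R -> R, forall j,
      {within Qbar Om T, continuous g j} /\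
      (forall z, Qint Om T z -> g j z = dxx i j u z.1 z.2).
    by move=> i; have [g hg] := choice (fun j => (Hdxx i j).2); exists g.
  have [G HG] := choice H.
  by exists G.
have db12 : (1 <= delta_bar d <= delta_bar d)%N by rewrite /delta_bar; case: ifP.
have [_ [G3 [cG3 HG3]]] := Hdt _ db12.
have ballOm : forall x, Om x -> exists2 rho, 0 < rho & forall y, `|y - x| < rho -> Om y.
  move=> x Ox; have : nbhs x Om by apply: open_nbhs_nbhs; split.
  move=> /nbhs_ballP [rho rho0 H]; exists rho => // y yx; apply: H.
  by rewrite -ball_normE /ball_ /= distrC.
have clo : forall y, Om y -> closure Om y by move=> y; exact: subset_closure.
have QbarP : forall y t, closure Om y -> 0 <= t <= T -> Qbar Om T (y, t).
  by move=> y t cy tT; split => //=; rewrite in_itv.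
have QintP : forall y t, Om y -> 0 < t < T -> Qint Om T (y, t).
  by move=> y t cy tT; split => //=; rewrite in_itv.
have ct : forall g : 'rV[R]_n * R -> R, {within Qbar Om T, continuous g} -> forall y, closure Om y ->
    g (y, t) @[t --> 0^'+] --> g (y, 0).
  move=> g cg y cy; apply: (ct_lem cg _ T0) => t tT.
  exact: QbarP.
have epsG : forall g : 'rV[R]_n * R -> R, {within Qbar Om T, continuous g} ->
    forall x, Om x -> forall rho, 0 < rho -> (forall y, `|y - x| < rho -> Om y) ->
    forall eps, 0 < eps -> exists2 eta, 0 < eta &
      forall y t, `|y - x| < eta -> 0 < t < eta -> `|g (y, t) - g (x, 0)| < eps.
  move=> g cg x Ox rho rho0 Hrho eps e0.
  have Q0 : Qbar Om T (x, 0) by apply: QbarP; [exact: clo | rewrite lexx ltW].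
  have [eta eta0 H] := within_eps cg Q0 e0.
  exists (Num.min eta (Num.min rho T)); first by rewrite !lt_min eta0 rho0 T0.
  move=> y t; rewrite !lt_min => /and3P[ye yr _] /andP[t0 /and3P[te _ tT]].
  apply: H => //=; last by rewrite subr0 gtr0_norm.
  by apply: QbarP; [exact/clo/Hrho | rewrite !ltW].
have D1 : forall x, Om x -> forall j, is_derive x (unitv R j) phi0 (G1 j (x, 0)).
  move=> x Ox j; have [rho rho0 Hrho] := ballOm x Ox.
  apply: (@deriv_limit _ _ u (G1 j) phi0 x (unitv R j) rho T) => //.
  - move=> y yx t /andP[t0 tT].
    have Qy := QintP y t (Hrho y yx) (introT andP (conj t0 tT)).
    split; first exact: ((Hdx j).1 (y, t) Qy).
    by rewrite ((HG1 j).2 _ Qy).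
  - move=> y yx.
    have := ct _ cu y (clo _ (Hrho _ yx)).
    by rewrite /uncurry2 /= Hinit //; apply: clo; apply: Hrho.
  - exact: (epsG _ (HG1 j).1 x Ox rho rho0 Hrho).
have D2 : forall x, Om x -> forall i j, is_derive x (unitv R i) (pd phi0 j) (G2 i j (x, 0)).
  move=> x Ox i j; have [rho rho0 Hrho] := ballOm x Ox.
  apply: (@deriv_limit _ _ (dx j u) (G2 i j) (pd phi0 j) x (unitv R i) rho T) => //.
  - move=> y yx t /andP[t0 tT].
    have Qy := QintP y t (Hrho y yx) (introT andP (conj t0 tT)).
    split; first exact: ((Hdxx i j).1 (y, t) Qy).
    by rewrite ((HG2 i j).2 _ Qy).
  - move=> y yx.
    have Oy := Hrho _ yx.
    have -> : pd phi0 j y = G1 j (y, 0) by have [_ <-] := D1 y Oy j.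
    apply: cvg_trans (near_eq_cvg _) (ct _ (HG1 j).1 y (clo _ Oy)).
    near=> t.
    have t0 : 0 < t by near: t; exact: nbhs_right_gt.
    have tT : t < T by near: t; exact: nbhs_right_lt.
    by rewrite ((HG1 j).2 _ (QintP y t Oy (introT andP (conj t0 tT)))).
  - exact: (epsG _ (HG2 i j).1 x Ox rho rho0 Hrho).
have a0 : 0 < (delta_bar d)%:R - d.
  rewrite /delta_bar; case: hd => /andP[h1 h2].
    by rewrite h2 subr_gt0.
  have -> : (d < 1) = false by apply/negbTE; rewrite -leNgt ltW.
  by rewrite subr_gt0.
set a := (delta_bar d)%:R - d in a0.
have Leq : forall x, Om x -> L0 p q r phi0 x = f x 0.
  move=> x Ox; have [rho rho0 Hrho] := ballOm x Ox.
  pose Lval := - (\sum_(i < n) \sum_(j < n) p i j x 0 * G2 i j (x, 0))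
     + (\sum_(i < n) q i x 0 * G1 i (x, 0)) + r x 0 * phi0 x.
  have -> : L0 p q r phi0 x = Lval.
    rewrite /L0 /Lval; congr (- _ + _ + _).
      apply: eq_bigr => i _; apply: eq_bigr => j _.
      by have [_ <-] := D2 x Ox i j.
    apply: eq_bigr => i _.
    by have [_ <-] := D1 x Ox i.
  have nearQ : forall g G : R -> R, (forall t, 0 < t < T -> g t = G t) ->
      G t @[t --> 0^'+] --> g t @[t --> 0^'+].
    move=> g G HgG; apply: near_eq_cvg; near=> t.
    have t0 : 0 < t by near: t; exact: nbhs_right_gt.
    have tT : t < T by near: t; exact: nbhs_right_lt.
    by apply: HgG; rewrite t0 tT.
  have HL : Lop p q r u x t @[t --> 0^'+] --> Lval.
    rewrite /Lop /Lval.
    apply: cvgD; first apply: cvgD.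
    - apply: cvgN.
      apply: cvg_big => [|i _]; first exact: add_continuous.
      apply: cvg_big => [|j _]; first exact: add_continuous.
      apply: cvgM; first exact: (ct _ (cp i j) x (clo _ Ox)).
      apply: cvg_trans (nearQ (fun t => G2 i j (x, t)) _ _) (ct _ (HG2 i j).1 x (clo _ Ox)).
      move=> t tT; exact: ((HG2 i j).2 _ (QintP x t Ox tT)).
    - apply: cvg_big => [|i _]; first exact: add_continuous.
      apply: cvgM; first exact: (ct _ (cq i) x (clo _ Ox)).
      apply: cvg_trans (nearQ (fun t => G1 i (x, t)) _ _) (ct _ (HG1 i).1 x (clo _ Ox)).
      move=> t tT; exact: ((HG1 i).2 _ (QintP x t Ox tT)).
    - apply: cvgM; first exact: (ct _ cr x (clo _ Ox)).
      have := ct _ cu x (clo _ Ox).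
      by rewrite /uncurry2 /= Hinit //; apply: clo.
  have HF : f x t @[t --> 0^'+] --> f x 0 := ct _ cf x (clo _ Ox).
  have HC1 : caputo d u x t @[t --> 0^'+] --> f x 0 - Lval.
    apply: cvg_trans (near_eq_cvg _) (cvgB HF HL).
    near=> t.
    have t0 : 0 < t by near: t; exact: nbhs_right_gt.
    have tT : t < T by near: t; exact: nbhs_right_lt.
    have Qs : Qset Om T (x, t) by split => //=; rewrite in_itv /= t0 ltW.
    change (f x t - Lop p q r u x t = caputo d u x t).
    by rewrite -(Heq x t Qs) addrK.
  have HC0 : caputo d u x t @[t --> 0^'+] --> 0.
    have [eta3 eta30 H3] := epsG G3 cG3 x Ox rho rho0 Hrho 1 ltr01.
    pose M := `|G3 (x, 0)| + 1.
    pose Ga := `|(Gamma a)^-1|.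
    have HB : (fun t => Ga * (M * (t `^ a / a))) @ 0^'+ --> 0.
      have : (fun t => Ga * (M * (t `^ a / a))) @ 0^'+ --> Ga * (M * (0 / a)).
        apply: cvgM; first exact: cvg_cst.
        apply: cvgM; first exact: cvg_cst.
        apply: cvgM; [exact: (powR_cvg0 a0) | exact: cvg_cst].
      by rewrite mul0r !mulr0.
    have HBN : (fun t => - (Ga * (M * (t `^ a / a)))) @ 0^'+ --> 0.
      rewrite -[X in _ --> X]oppr0; exact: (cvgN HB).
    apply: (squeeze_cvgr _ HBN HB).
    near=> t.
    have t0 : 0 < t by near: t; exact: nbhs_right_gt.
    have tT : t < T by near: t; exact: nbhs_right_lt.
    have te : t < eta3 by near: t; exact: nbhs_right_lt.
    rewrite -ler_norml.
    have Qs : Qset Om T (x, t) by split => //=; rewrite in_itv /= t0 ltW.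
    have [[_ Hint] _ _] := Hder x t Qs.
    rewrite /caputo -/a normrM; apply: ler_wpM2l => //.
    apply: caputo_bound => //.
    move=> s /andP[s0 st].
    have Qs' := QintP x s Ox (introT andP (conj s0 (lt_trans st tT))).
    have := HG3 _ Qs'; rewrite /= => <-.
    have := H3 x s _ (introT andP (conj s0 (lt_trans st te))).
    rewrite subrr normr0 => /(_ eta30) Hlt.
    rewrite -(subrK (G3 (x, 0)) (G3 (x, s))) /M.
    apply: (le_trans (ler_normD _ _)); rewrite addrC lerD2l ltW //.
  have E : f x 0 - Lval = 0 by apply: (cvg_unique _ HC1 HC0).
  by apply/eqP; rewrite eq_sym -subr_eq0 E.
have Hsol : bvp_solution Om p q r f psi phi0.
  split => //.
  move=> x Ox i; split; first by have [] := D1 x Ox i.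
  by move=> j; have [] := D2 x Ox i j.
split => //.
by move=> w Hw x Hx; exact: Huniq.
Unshelve. all: by end_near.
Qed.
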